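(* Let $k,n\in\mathbb{N}$ and let $Z_{n,k}$ be the Cayley graph of $\mathbb{Z}/n\mathbb{Z}$ with respect to $\{-k,\ldots,k\}$. If $A\subset Z_{n,k}$ satisfies $k\le|A|\le n-k$, then $|\partial^EA|\ge\frac14k^2-1$.
   Context: In the Cayley graph $\mathcal{C}(G,S)$ of a group $G$ with symmetric generating set $S$, vertices are elements of $G$ and $x,y$ are adjacent iff $y=xs$ for some $s\in S\setminus\{1\}$. $\partial^EA$ is the set of edges with exactly one endpoint in $A$. *)

(* Defs.v *)
From HB Require Import structures.
From mathcomp Require Import all_boot all_order all_algebra.
Set Implicit Arguments. Unset Strict Implicit. Unset Printing Implicit Defensive.

(* Adjacency in the Cayley graph Z_{n,k} = C(Z/nZ, {-k,...,k}):
   x ~ y iff y = x + s (mod n) for some s in {-k..k} with s <> 0 in Z/nZ,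
   i.e. x <> y and y = x + s or x = y + s (mod n) for some 1 <= s <= k. *)
Definition cayley_adj (n k : nat) (x y : 'I_n) : bool :=
  (x != y) &&
  [exists s : 'I_k.+1,
     (0 < s) && ((y %% n == (x + s) %% n) || (x %% n == (y + s) %% n))].

(* Edge boundary: edges with exactly one endpoint in A.  Since the graph is
   simple and undirected, such an edge {x,y} corresponds bijectively to the
   ordered pair (x,y) with x in A, y not in A. *)
Definition edge_boundary (n k : nat) (A : {set 'I_n}) : {set 'I_n * 'I_n} :=
  [set p | [&& p.1 \in A, p.2 \notin A & cayley_adj k p.1 p.2]].

(* Main.v *)
Require Import Defs.
From HB Require Import structures.
From mathcomp Require Import all_boot all_order all_algebra.
From mathcomp Require Import zify ring lra.
Import Order.TTheory GRing.Theory Num.Theory.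

Definition win (n k j : nat) : {set 'I_n} :=
  [set x : 'I_n | [exists d : 'I_k.+1, val x == (j + d) %% n]].

Lemma win_adj n k j (x y : 'I_n) : x \in win n k j -> y \in win n k j ->
  x != y -> cayley_adj k x y.
Proof.
rewrite !inE => /existsP[dx /eqP hx] /existsP[dy /eqP hy] xy.
rewrite /cayley_adj xy /=.
have ndxy : (val dx != val dy).
  apply/negP => /eqP e; move: xy; rewrite -val_eqE /= hx hy e eqxx //.
have ndxy' : val dx <> val dy by apply/eqP.
case: (ltnP dx dy) => hd.
- have hs : dy - dx < k.+1 by have := ltn_ord dy; lia.
  apply/existsP; exists (Ordinal hs) => /=.
  apply/andP; split; first by lia.
  apply/orP; left.
  rewrite hx hy modn_mod modnDml -addnA subnKC //; exact: ltnW.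
- have hs : dx - dy < k.+1 by have := ltn_ord dx; lia.
  apply/existsP; exists (Ordinal hs) => /=.
  apply/andP; split; first by rewrite subn_gt0 ltn_neqAle hd andbT eq_sym; exact: ndxy.
  apply/orP; right.
  rewrite hx hy modn_mod modnDml -addnA subnKC //.
Qed.

Lemma card_win n k j : k < n -> #|win n k j| = k.+1.
Proof.
move=> kn.
have n0 : 0 < n by lia.
pose f (d : 'I_k.+1) : 'I_n := Ordinal (ltn_pmod (j + d) n0).
have -> : win n k j = [set f d | d in [set: 'I_k.+1]].
  apply/setP => x; rewrite inE; apply/existsP/imsetP.
  - by move=> [d /eqP hd]; exists d; rewrite ?inE //; apply: val_inj.
  - by move=> [d _ ->]; exists d.
rewrite card_imset ?cardsT ?card_ord //.
move=> d1 d2 /(congr1 val) /= /eqP; rewrite eqn_modDl => /eqP.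
rewrite !modn_small; try (apply: leq_trans (ltn_ord _) _; exact kn).
by move=> e; apply: val_inj.
Qed.

Lemma win_step n k j (A : {set 'I_n}) : 0 < n ->
  #|win n k j.+1 :&: A| <= (#|win n k j :&: A|).+1 /\
  #|win n k j :&: A| <= (#|win n k j.+1 :&: A|).+1.
Proof.
move=> n0.
pose e1 : 'I_n := Ordinal (ltn_pmod (j + k.+1) n0).
pose e0 : 'I_n := Ordinal (ltn_pmod j n0).
split.
- apply: leq_trans (_ : #|e1 |: (win n k j :&: A)| <= _).
    apply: subset_leq_card; apply/subsetP => x; rewrite !inE.
    case/andP => /existsP[d /eqP hd] ->; rewrite andbT.
    case: (ltnP d k) => dk.
    + apply/orP; right; apply/existsP.
      have hs : d.+1 < k.+1 by [].
      by exists (Ordinal hs); rewrite hd /= addSnnS.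
    + apply/orP; left; apply/eqP; apply: val_inj => /=.
      have : nat_of_ord d = k by apply/eqP; rewrite eqn_leq dk -ltnS ltn_ord.
      move=> e; rewrite hd addSnnS; congr (_ %% _); by rewrite e.
  by rewrite cardsU1; case: (_ \notin _).
- apply: leq_trans (_ : #|e0 |: (win n k j.+1 :&: A)| <= _).
    apply: subset_leq_card; apply/subsetP => x; rewrite !inE.
    case/andP => /existsP[d /eqP hd] ->; rewrite andbT.
    case: (posnP d) => d0.
    + apply/orP; left; apply/eqP; apply: val_inj => /=.
      by rewrite hd d0 addn0.
    + apply/orP; right; apply/existsP.
      have hs : d.-1 < k.+1 by have := ltn_ord d; lia.
      exists (Ordinal hs); rewrite hd /=; apply/eqP; congr (_ %% _); lia.
  by rewrite cardsU1; case: (_ \notin _).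
Qed.

Lemma ivt_up (f : nat -> nat) t j :
  (forall m, f m.+1 <= (f m).+1) -> f 0 <= t -> t <= f j -> exists m, f m = t.
Proof.
move=> hf h0; elim: j => [|j IH] hj.
  by exists 0; apply/eqP; rewrite eqn_leq h0 hj.
case: (leqP t (f j)) => h; first exact: IH.
by exists j.+1; have := hf j; lia.
Qed.

Lemma ivt_down (f : nat -> nat) t j :
  (forall m, f m <= (f m.+1).+1) -> t <= f 0 -> f j <= t -> exists m, f m = t.
Proof.
move=> hf h0; elim: j => [|j IH] hj.
  by exists 0; apply/eqP; rewrite eqn_leq h0 hj.
case: (leqP (f j) t) => h; first exact: IH.
by exists j.+1; have := hf j; lia.
Qed.

Lemma count_pairs n (S : {set 'I_n * 'I_n}) (D : {set 'I_n}) (F : 'I_n -> {set 'I_n}) :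
  (forall x y, x \in D -> y \in F x -> (x, y) \in S) -> \sum_(x in D) #|F x| <= #|S|.
Proof.
move=> H.
have -> : \sum_(x in D) #|F x| = #|[set p : 'I_n * 'I_n | (p.1 \in D) && (p.2 \in F p.1)]|.
  rewrite -sum1_card.
  under eq_bigr do rewrite -sum1_card.
  rewrite pair_big_dep; apply: eq_bigl => p; by rewrite inE.
apply: subset_leq_card; apply/subsetP => -[x y]; rewrite inE /= => /andP[]; exact: H.
Qed.

Lemma count_pairs2 n (S : {set 'I_n * 'I_n}) (D : {set 'I_n}) (F : 'I_n -> {set 'I_n}) :
  (forall y x, y \in D -> x \in F y -> (x, y) \in S) -> \sum_(y in D) #|F y| <= #|S|.
Proof.
move=> H.
have inj : injective (fun p : 'I_n * 'I_n => (p.2, p.1)) by move=> [a b] [c d] [-> ->].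
rewrite -(card_imset S inj); apply: count_pairs => y x hy hx.
by apply/imsetP; exists (x, y) => //; apply: H.
Qed.

Lemma win_bound n k j (A : {set 'I_n}) : k < n ->
  #|win n k j :&: A| * (k.+1 - #|win n k j :&: A|) <= #|edge_boundary k A|.
Proof.
move=> kn.
have hc := cardsID A (win n k j); rewrite card_win // in hc.
have -> : k.+1 - #|win n k j :&: A| = #|win n k j :\: A| by lia.
rewrite -cardsX; apply: subset_leq_card; apply/subsetP => -[x y].
rewrite !inE /= => /andP[/andP[wx xA] /andP[yA wy]].
rewrite xA yA /=; apply: (@win_adj n k j) => //.
- by rewrite inE.
- by rewrite inE.
- by apply: contraNneq yA => <-.
Qed.

Lemma win_self n k (y : 'I_n) : y \in win n k y.
Proof.
rewrite inE; apply/existsP; exists ord0; by rewrite addn0 modn_small.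
Qed.

Theorem mainTheorem20 (k n : nat) (A : {set 'I_n}) :
  k <= #|A| -> #|A| <= n - k ->
  ((k%:R ^+ 2) / 4%:R - 1 <= (#|edge_boundary k A|)%:R :> rat)%R.
Proof.
move=> h1 h2.
set B := #|edge_boundary k A|.
suff hB : (k ^ 2 <= 4 * B + 4)%N.
  have : (k%:R ^+ 2 <= 4%:R * B%:R + 4%:R :> rat)%R.
    by rewrite -natrX -natrM -natrD ler_nat.
  move=> h; lra.
case: (posnP k) => k0; first by rewrite k0.
have kn : k < n by lia.
have n0 : 0 < n by lia.
set t := k.+1 %/ 2.
pose a j := #|win n k j :&: A|.
have hs1 : forall m, a m.+1 <= (a m).+1 by move=> m; case: (@win_step n k m A n0).
have hs2 : forall m, a m <= (a m.+1).+1 by move=> m; case: (@win_step n k m A n0).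
have ht : t.*2 <= k.+1 <= t.*2.+1.
  rewrite /t -!muln2; apply/andP; split; first exact: leq_trunc_div.
  by rewrite ltnS -[k.+1]odd_double_half /= -muln2; case: (odd k); lia.
have key : t * (k.+1 - t) <= B.
  have winb : forall m, a m * (k.+1 - a m) <= B by move=> m; exact: win_bound.
  have hcA : #|A| + #|~: A| = n by rewrite cardsC card_ord.
  case: (ltngtP (a 0) t) => h0; last first.
  - by have := winb 0; rewrite h0.
  -
    have [hall|] := boolP [forall y : 'I_n, t < a y].
    + have : \sum_(y in ~: A) #|win n k y :&: A| <= B.
        apply: count_pairs2 => y x; rewrite !inE => yA /andP[wx xA].
        rewrite xA yA /=; apply: (@win_adj n k y);
          [by rewrite inE | exact: win_self | by apply: contraNneq yA => <-].
      have : \sum_(y in ~: A) t.+1 <= \sum_(y in ~: A) #|win n k y :&: A|.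
        by apply: leq_sum => y _; move/forallP: hall => /(_ y).
      rewrite sum_nat_const => s1 s2.
      have s3 := leq_trans s1 s2.
      move: s3 hcA h2 ht; rewrite -!muln2; nia.
    + rewrite negb_forall => /existsP[y]; rewrite -leqNgt => hy.
      have [m hm] := @ivt_down a t y hs2 (ltnW h0) hy.
      by have := winb m; rewrite hm.
  -
    have [hall|] := boolP [forall y : 'I_n, a y < t].
    + have : \sum_(x in A) #|win n k x :\: A| <= B.
        apply: count_pairs => x y xA; rewrite !inE => /andP[yA wy].
        rewrite xA yA /=; apply: (@win_adj n k x);
          [exact: win_self | by rewrite inE | by apply: contraNneq yA => <-].
      have : \sum_(x in A) (k.+2 - t) <= \sum_(x in A) #|win n k x :\: A|.
        apply: leq_sum => x _; move/forallP: hall => /(_ x) hx.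
        have hc := cardsID A (win n k x); rewrite card_win // in hc.
        rewrite /a in hx; lia.
      rewrite sum_nat_const => s1 s2.
      have s3 := leq_trans s1 s2.
      move: s3 h1 ht; rewrite -!muln2; nia.
    + rewrite negb_forall => /existsP[y]; rewrite -leqNgt => hy.
      have [m hm] := @ivt_up a t y hs1 (ltnW h0) hy.
      by have := winb m; rewrite hm.
move: ht key; rewrite -!muln2; nia.
Qed.
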